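(* Let $X$ be a real random variable with mean zero and finite variance $\sigma^2>0$, let $X^*$ have the zero bias distribution of $X$, and suppose $X^*\leq_{\sigma,k}X+c$ for positive constants $k$ and $c$. Then for all $x\ge0$, $$\mathbb{P}(X-\mathbb{E}X\ge x)\le\exp\left(-\frac{x^2}{2(k^2+cx)}\right).$$
   Context: Zero bias transform: for $X$ with mean zero and finite variance $\sigma^2$, $X^*$ has the zero bias distribution of $X$ if $\mathbb{E}[Xf(X)]=\sigma^2\mathbb{E}[f'(X^* )]$ for all absolutely continuous $f$ for which the expectations exist. Weighted stochastic order: $U\leq_{a,b}V$ means $a^2\mathbb{E}f(U)\le b^2\mathbb{E}f(V)$ for every increasing positive function $f$ for which the expectations exist. *)

(* Defs.v *)
From HB Require Import structures.
From mathcomp Require Import all_boot all_order all_algebra.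
From mathcomp Require Import all_classical all_reals all_analysis.
Set Implicit Arguments. Unset Strict Implicit. Unset Printing Implicit Defensive.
Import Order.TTheory GRing.Theory Num.Theory.
Local Open Scope classical_set_scope.
Local Open Scope ring_scope.

Definition abs_continuous_on {R : realType} (f : R -> R) (a b : R) : Prop :=
  forall eps : R, 0 < eps -> exists2 delta : R, 0 < delta &
    forall (n : nat) (s : 'I_n -> R * R),
      (forall i, a <= (s i).1 /\ (s i).1 <= (s i).2 /\ (s i).2 <= b) ->
      (forall i j : 'I_n, (i < j)%N -> (s i).2 <= (s j).1) ->
      \sum_(i < n) ((s i).2 - (s i).1) < delta ->
      \sum_(i < n) `|f (s i).2 - f (s i).1| < eps.

Definition abs_continuous {R : realType} (f : R -> R) : Prop :=
  forall a b : R, a <= b -> abs_continuous_on f a b.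

(* Xs (on the probability space P') has the zero bias distribution of X (on
   P), where sigma^2 is the variance of X:
   E[X f(X)] = sigma^2 E[f'(Xs)] for every absolutely continuous f for which
   the expectations exist. *)
Definition zero_bias {R : realType} {d d' : measure_display}
  {T : measurableType d} {T' : measurableType d'}
  (P : probability T R) (X : T -> R) (sigma : R)
  (P' : probability T' R) (Xs : T' -> R) : Prop :=
  forall f : R -> R, abs_continuous f ->
    P.-integrable setT (EFin \o (fun w => X w * f (X w))) ->
    P'.-integrable setT (EFin \o (fun w => derive1 f (Xs w))) ->
    ('E_P[fun w => (X w * f (X w))%R] =
       (sigma ^+ 2)%:E * 'E_P'[fun w => (derive1 f (Xs w))%R])%E.

(* Weighted stochastic order  U <=_{a,b} V  (U on P, V on P'):
   a^2 E f(U) <= b^2 E f(V) for every increasing positive f for which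
   the expectations exist. *)
Definition weighted_le {R : realType} {d d' : measure_display}
  {T : measurableType d} {T' : measurableType d'}
  (P : probability T R) (U : T -> R) (P' : probability T' R) (V : T' -> R)
  (a b : R) : Prop :=
  forall f : R -> R, {homo f : x y / x <= y} -> (forall x, 0 < f x) ->
    P.-integrable setT (EFin \o (f \o U)) ->
    P'.-integrable setT (EFin \o (f \o V)) ->
    ((a ^+ 2)%:E * 'E_P[f \o U] <= (b ^+ 2)%:E * 'E_P'[f \o V])%E.

(* Main.v *)
Require Import Defs.
From HB Require Import structures.
From mathcomp Require Import all_boot all_order all_algebra.
From mathcomp Require Import all_classical all_reals all_analysis.
From mathcomp Require Import ring lra measurable_realfun.
Import Order.TTheory GRing.Theory Num.Theory.
Local Open Scope classical_set_scope.
Local Open Scope ring_scope.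

Section real_lemmas.
Context {R : realType}.
Implicit Types x y a t : R.

Lemma exp_secant t u v : u <= v ->
  t * expR (t * u) * (v - u) <= expR (t * v) - expR (t * u) /\
  expR (t * v) - expR (t * u) <= t * expR (t * v) * (v - u).
Proof.
move=> uv.
have E1 : expR (t * v) = expR (t * u) * expR (t * (v - u)).
  by rewrite -expRD; congr expR; ring.
have E2 : expR (t * u) = expR (t * v) * expR (- (t * (v - u))).
  by rewrite -expRD; congr expR; ring.
have h1 := expR_ge1Dx (t * (v - u)).
have h2 := expR_ge1Dx (- (t * (v - u))).
have e1 := expR_gt0 (t * u).
have e2 := expR_gt0 (t * v).
split.
- have : expR (t * u) * (1 + t * (v - u)) <= expR (t * u) * expR (t * (v - u)).
    by rewrite ler_pM2l.
  rewrite -E1; nra.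
- have : expR (t * v) * (1 + - (t * (v - u))) <= expR (t * v) * expR (- (t * (v - u))).
    by rewrite ler_pM2l.
  rewrite -E2; nra.
Qed.

Lemma derive1_taylor (f : R -> R) x D K :
  (forall y, `|f y - f x - D * (y - x)| <= K * (y - x) ^+ 2) ->
  derive1 f x = D.
Proof.
move=> H; rewrite /derive1; apply: cvg_lim => //.
apply/cvgrPdist_lt => e e0.
have K1 : 0 < `|K| + 1 by rewrite ltr_pwDr.
near=> h.
have hn0 : h != 0.
  by near: h; exists 1 => //= y _.
have hlt : `|h| < e / (`|K| + 1).
  near: h; apply: dnbhs0_lt; exact: divr_gt0.
have := H (h + x); rewrite addrK => Hh.
have eq : D - h^-1 *: (f (h + x) - f x) = - (h^-1 * (f (h + x) - f x - D * h)).
  by rewrite /GRing.scale /=; field.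
rewrite eq normrN normrM normfV.
have hp : 0 < `|h| by rewrite normr_gt0.
have : `|h|^-1 * `|f (h + x) - f x - D * h| <= `|h|^-1 * (K * h ^+ 2).
  by rewrite ler_wpM2l // invr_ge0 ltW.
have -> : `|h|^-1 * (K * h ^+ 2) = K * `|h|.
  by rewrite -real_normK ?num_real //; field; rewrite gt_eqF.
move=> h1; apply: (le_lt_trans h1).
have : `|h| * (`|K| + 1) < e by rewrite -ltr_pdivlMr.
have := ler_norm K.
nra.
Unshelve. all: end_near. Qed.

Definition Fa t a y : R := expR (t * Num.min y a) * (1 + t * Num.max (y - a) 0).
Definition Ga t a y : R := t * expR (t * Num.min y a).

Lemma secant_Fa t a x y : 0 <= t -> x <= y ->
  Ga t a x * (y - x) <= Fa t a y - Fa t a x /\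
  Fa t a y - Fa t a x <= Ga t a y * (y - x).
Proof.
move=> t0 xy; rewrite /Fa /Ga.
have [ya|ay] := leP y a.
  have xa : x <= a by apply: le_trans ya.
  rewrite ?(min_l ya) ?(min_l xa) (max_r (_ : y - a <= 0)) ?subr_le0 //.
  rewrite ?(max_r (_ : x - a <= 0)) ?subr_le0 // ?mulr0 addr0 !mulr1.
  have [h1 h2] := exp_secant t _ _ xy; split; lra.
have [ax|xa] := leP a x.
  rewrite ?(min_r ax) ?(min_r (ltW ay)) ?(max_l (_ : 0 <= y - a)) ?subr_ge0 ?(ltW ay) //.
  rewrite ?(max_l (_ : 0 <= x - a)) ?subr_ge0 //.
  split; rewrite le_eqVlt; apply/orP; left; apply/eqP; ring.
rewrite ?(min_r (ltW ay)) ?(min_l (ltW xa)) ?(max_l (_ : 0 <= y - a)) ?subr_ge0 ?(ltW ay) //.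
rewrite ?(max_r (_ : x - a <= 0)) ?subr_le0 ?(ltW xa) // ?mulr0 addr0 mulr1.
have [h1 h2] := exp_secant t _ _ (ltW xa).
have h3 : expR (t * x) <= expR (t * a) by rewrite ler_expR ler_wpM2l // ltW.
have ya : 0 <= y - a by rewrite subr_ge0 ltW.
split; nra.
Qed.

Lemma Ga_mono t a x y : 0 <= t -> x <= y -> Ga t a x <= Ga t a y.
Proof.
move=> t0 xy; rewrite /Ga ler_wpM2l // ler_expR ler_wpM2l //.
exact: le_min2.
Qed.

Lemma Ga_gt0 t a y : 0 < t -> 0 < Ga t a y.
Proof. by move=> t0; rewrite /Ga mulr_gt0 // expR_gt0. Qed.

Lemma Ga_le t a y : 0 <= t -> Ga t a y <= t * expR (t * a).
Proof.
by move=> t0; rewrite /Ga ler_wpM2l // ler_expR ler_wpM2l // ge_min lexx orbT.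
Qed.

Lemma Ga_lip t a x y : 0 <= t -> x <= y ->
  Ga t a y - Ga t a x <= t ^+ 2 * expR (t * a) * (y - x).
Proof.
move=> t0 xy; rewrite /Ga.
have mxy : Num.min x a <= Num.min y a by exact: le_min2.
have [_ h2] := exp_secant t _ _ mxy.
have d : Num.min y a - Num.min x a <= y - x.
  case: (leP y a) => ya; case: (leP x a) => xa.
  - by rewrite ?(min_l ya) ?(min_l xa).
  - by move: (le_lt_trans xy (le_lt_trans ya xa)); rewrite ltxx.
  - by rewrite ?(min_r (ltW ya)) ?(min_l xa); lra.
  - by rewrite ?(min_r (ltW ya)) ?(min_r (ltW xa)); lra.
have e1 : expR (t * Num.min y a) <= expR (t * a).
  by rewrite ler_expR ler_wpM2l // ge_min lexx orbT.
have e0 := expR_gt0 (t * Num.min y a).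
have d0 : 0 <= Num.min y a - Num.min x a by rewrite subr_ge0.
have : t * (expR (t * Num.min y a) - expR (t * Num.min x a)) <=
   t * (t * expR (t * Num.min y a) * (Num.min y a - Num.min x a)) by rewrite ler_wpM2l.
have : t * (t * expR (t * Num.min y a) * (Num.min y a - Num.min x a)) <=
   t ^+ 2 * expR (t * a) * (y - x).
  have h5 : expR (t * Num.min y a) * (Num.min y a - Num.min x a) <= expR (t * a) * (y - x).
    by apply: ler_pM => //; exact: ltW.
  have h6 := ler_wpM2l (exprn_ge0 2 t0) h5.
  have -> : t * (t * expR (t * Num.min y a) * (Num.min y a - Num.min x a)) =
    t ^+ 2 * (expR (t * Num.min y a) * (Num.min y a - Num.min x a)) by ring.
  by rewrite -mulrA.
move=> h3 h4; rewrite -mulrBr; lra.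
Qed.

Lemma taylor_gen (f g : R -> R) K :
  (forall x y, x <= y -> g x * (y - x) <= f y - f x /\ f y - f x <= g y * (y - x)) ->
  (forall x y, x <= y -> g y - g x <= K * (y - x)) ->
  forall x y, `|f y - f x - g x * (y - x)| <= K * (y - x) ^+ 2.
Proof.
move=> S L x y; have [xy|yx] := leP x y.
  have [h1 h2] := S x y xy; have h3 := L x y xy.
  have d : 0 <= y - x by rewrite subr_ge0.
  rewrite ger0_norm; last lra.
  have : (g y - g x) * (y - x) <= K * (y - x) * (y - x) by rewrite ler_wpM2r.
  rewrite expr2; nra.
have yx' := ltW yx.
have [h1 h2] := S y x yx'; have h3 := L y x yx'.
have d : 0 <= x - y by rewrite subr_ge0.
rewrite ger0_norm; last nra.
have : (g x - g y) * (x - y) <= K * (x - y) * (x - y) by rewrite ler_wpM2r.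
rewrite expr2; nra.
Qed.

Lemma lip_gen (f g : R -> R) L :
  (forall x y, x <= y -> g x * (y - x) <= f y - f x /\ f y - f x <= g y * (y - x)) ->
  (forall x, 0 <= g x <= L) ->
  forall x y, `|f y - f x| <= L * `|y - x|.
Proof.
move=> S B x y; have [xy|yx] := leP x y.
  have [h1 h2] := S x y xy; have /andP[b1 b2] := B x; have /andP[b3 b4] := B y.
  have d : 0 <= y - x by rewrite subr_ge0.
  rewrite !ger0_norm //; last nra.
  nra.
have yx' := ltW yx.
have [h1 h2] := S y x yx'; have /andP[b1 b2] := B x; have /andP[b3 b4] := B y.
have d : 0 <= x - y by rewrite subr_ge0.
rewrite (distrC (f y)) (distrC y) !ger0_norm //; last nra.
nra.
Qed.

Lemma lip_abs_continuous (f : R -> R) L : 0 <= L ->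
  (forall x y, `|f y - f x| <= L * `|y - x|) -> abs_continuous f.
Proof.
move=> L0 H a b _ eps e0.
have L1 : 0 < L + 1 by lra.
exists (eps / (L + 1)); first exact: divr_gt0.
move=> n s hs _ hsum.
apply: (@le_lt_trans _ _ (\sum_(i < n) L * ((s i).2 - (s i).1))).
  apply: ler_sum => i _.
  have [_ [h _]] := hs i.
  by rewrite (le_trans (H _ _)) // ger0_norm // subr_ge0.
rewrite -mulr_sumr.
have : L * (\sum_(i < n) ((s i).2 - (s i).1)) <= L * (eps / (L + 1)).
  by rewrite ler_wpM2l // ltW.
have : L * (eps / (L + 1)) < eps.
  rewrite mulrA ltr_pdivrMr // ; nra.
lra.
Qed.

Lemma Fa_derive t a y : 0 <= t -> derive1 (Fa t a) y = Ga t a y.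
Proof.
move=> t0; apply: (@derive1_taylor _ _ _ (t ^+ 2 * expR (t * a))).
apply: taylor_gen => x z xz; [exact: secant_Fa | exact: Ga_lip].
Qed.

Lemma Fa_abs t a : 0 < t -> abs_continuous (Fa t a).
Proof.
move=> t0; apply: (@lip_abs_continuous _ (t * expR (t * a))).
  by rewrite mulr_ge0 ?expR_ge0 // ltW.
apply: (@lip_gen _ (Ga t a)) => [x y xy|x].
  exact: secant_Fa (ltW t0) xy.
by rewrite (ltW (Ga_gt0 t a x t0)) Ga_le // ltW.
Qed.

Lemma mfun_em t a : measurable_fun [set: R] (fun y => expR (t * Num.min y a)).
Proof.
apply: measurableT_comp; first exact: measurable_expR.
apply: measurable_funM; first exact: measurable_cst.
exact: (@measurable_minr _ _ _ _ id (cst a)).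
Qed.

Lemma mfun_Fa t a : measurable_fun [set: R] (Fa t a).
Proof.
apply: measurable_funM; first exact: mfun_em.
apply: measurable_funD; first exact: measurable_cst.
apply: measurable_funM; first exact: measurable_cst.
apply: (@measurable_maxr _ _ _ _ (fun y => y - a) (cst 0)) => //.
by apply: measurable_funB.
Qed.

Lemma mfun_Ga t a : measurable_fun [set: R] (Ga t a).
Proof. apply: measurable_funM; [exact: measurable_cst | exact: mfun_em]. Qed.

Lemma Fa_ge0 t a y : 0 <= t -> 0 <= Fa t a y.
Proof.
move=> t0; rewrite /Fa mulr_ge0 ?expR_ge0 // addr_ge0 // mulr_ge0 //.
by rewrite le_max lexx orbT.
Qed.

Lemma Fa_le t a y : 0 <= t -> 0 <= a -> Fa t a y <= expR (t * a) * (1 + t * `|y|).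
Proof.
move=> t0 a0; rewrite /Fa; apply: ler_pM.
- exact: expR_ge0.
- by rewrite addr_ge0 // mulr_ge0 // le_max lexx orbT.
- by rewrite ler_expR ler_wpM2l // ge_min lexx orbT.
- rewrite lerD2l ler_wpM2l // ge_max normr_ge0 andbT.
  by rewrite (le_trans _ (ler_norm y)) // lerBlDr lerDl.
Qed.

Lemma key_pt t a y : 0 <= t -> 0 <= a ->
  Num.min y a * expR (t * Num.min y a) <= y * Fa t a y.
Proof.
move=> t0 a0; rewrite /Fa; have [ya|ay] := leP y a.
  rewrite ?(min_l ya) (max_r (_ : y - a <= 0)) ?subr_le0 // mulr0 addr0 mulr1.
  by [].
rewrite ?(min_r (ltW ay)) (max_l (_ : 0 <= y - a)) ?subr_ge0 ?(ltW ay) //.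
have e0 := expR_gt0 (t * a).
have h1 : 0 <= t * (y - a) by rewrite mulr_ge0 // subr_ge0 ltW.
have h2 : 0 <= y * (t * (y - a)) by rewrite mulr_ge0 // (le_trans a0) // ltW.
have h3 : 0 <= expR (t * a) * (y * (t * (y - a))) by rewrite mulr_ge0 // ltW.
have h4 : 0 <= expR (t * a) * (y - a) by rewrite mulr_ge0 ?subr_ge0 // ltW.
have -> : y * (expR (t * a) * (1 + t * (y - a))) =
  a * expR (t * a) + expR (t * a) * (y - a) + expR (t * a) * (y * (t * (y - a))) by ring.
lra.
Qed.

Lemma Ga_shift t a c y : 0 <= t -> 0 <= c ->
  Ga t a (y + c) <= t * expR (t * c) * expR (t * Num.min y a).
Proof.
move=> t0 c0; rewrite /Ga -mulrA ler_wpM2l // -expRD ler_expR -mulrDr ler_wpM2l //.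
rewrite ge_min; case: (leP y a) => ya.
  by rewrite addrC lexx.
by rewrite lerDr c0 orbT.
Qed.

Lemma is_derive_expR_comp (g : R -> R) x dg :
  is_derive x 1 g dg -> is_derive x 1 (fun s => expR (g s)) (expR (g x) * dg).
Proof.
move=> [dgx Dg].
have dE : derivable expR (g x) 1 by exact: derivable_expR.
have dc : derivable (expR \o g) x 1.
  apply/derivable1_diffP; apply: differentiable_comp; exact/derivable1_diffP.
apply: DeriveDef => //.
rewrite -derive1E (derive1_comp dgx dE) !derive1E Dg.
by rewrite (@derive_val _ _ _ _ _ _ _ (is_derive_expR (g x))).
Qed.

Lemma is_derive_mulc (m s : R) : is_derive s 1 (fun s => s * m) m.
Proof.
have H := is_deriveM (is_derive_id s (1:R)) (is_derive_cst m s (1:R)).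
have -> : (fun s => s * m) = ( @id R) * cst m by [].
by apply: is_derive_eq H _; rewrite /= scaler0 add0r /GRing.scale /= mulr1.
Qed.

Lemma is_derive_expM (m s : R) :
  is_derive s 1 (fun s => expR (s * m)) (m * expR (s * m)).
Proof.
have H := @is_derive_expR_comp (fun s => s * m) s m (is_derive_mulc m s).
by apply: is_derive_eq H _; rewrite mulrC.
Qed.

End real_lemmas.

Section gen.
Context {R : realType} {d : measure_display} {T : measurableType d} (P : probability T R).

Lemma int_bdd (f : T -> R) B : measurable_fun setT f ->
  (forall w, `|f w| <= B) -> P.-integrable setT (EFin \o f).
Proof.
move=> mf fB.
apply: (@le_integrable _ _ _ _ _ _ (EFin \o f) (EFin \o cst B)).
- by [].
- exact/measurable_EFinP.
- move=> w _ /=; rewrite lee_fin (le_trans (fB w)) //.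
  by rewrite ler_norm.
- exact: finite_measure_integrable_cst.
Qed.

Lemma RintE (f : T -> R) : P.-integrable setT (EFin \o f) ->
  (\int[P]_w (f w)%:E)%E = (\int[P]_w f w)%:E.
Proof. by move=> fi; rewrite /Rintegral fineK //; exact: integrable_fin_num. Qed.

Lemma int_poly (X : T -> R) al be : X \in Lfun P 2%:E ->
  P.-integrable setT (EFin \o (fun w => al * `|X w| + be * X w ^+ 2)).
Proof.
move=> X2.
have X1 : X \in Lfun P 1 by apply: (Lfun_subset12 (fin_num_measure _ _ _)) => //.
have i1 : P.-integrable setT (EFin \o (Num.norm \o X)) by apply: integrable_norm; exact/Lfun1_integrable.
have i2 := Lfun2_integrable_sqr X2.
have -> : EFin \o (fun w => al * `|X w| + be * X w ^+ 2) =
   ((EFin \o (fun w => (al * `|X w|)%R)) \+ (EFin \o (fun w => (be * X w ^+ 2)%R)))%E.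
  by apply/funext => w /=; rewrite EFinD.
apply: integrableD => //.
  have -> : EFin \o (fun w => al * `|X w|) = (fun w => (al%:E * (EFin \o (Num.norm \o X)) w)%E).
    by apply/funext => w /=; rewrite EFinM.
  exact: integrableZl.
have -> : EFin \o (fun w => be * X w ^+ 2) = (fun w => (be%:E * (EFin \o (fun w => (X w ^+ 2)%R)) w)%E).
  by apply/funext => w /=; rewrite EFinM.
exact: integrableZl.
Qed.

Lemma expE (f : T -> R) : P.-integrable setT (EFin \o f) ->
  ('E_P[f] = (\int[P]_w f w)%:E)%E.
Proof. by move=> fi; rewrite unlock RintE. Qed.

Lemma int_poly3 (X : T -> R) al be ga : X \in Lfun P 2%:E ->
  P.-integrable setT (EFin \o (fun w => al * `|X w| + be * X w ^+ 2 + ga)).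
Proof.
move=> X2.
have -> : EFin \o (fun w => al * `|X w| + be * X w ^+ 2 + ga) =
   ((EFin \o (fun w => (al * `|X w| + be * X w ^+ 2)%R)) \+ (EFin \o cst ga))%E.
  by apply/funext => w /=; rewrite EFinD.
apply: integrableD => //; last exact: finite_measure_integrable_cst.
exact: int_poly.
Qed.

End gen.

Section mgf.
Context {R : realType} {d : measure_display} {T : measurableType d}
  (P : probability T R) (X : {RV P >-> R}).
Hypothesis X2 : (X : T -> R) \in Lfun P 2%:E.
Variable a : R.
Hypothesis a0 : 0 <= a.

Definition em (t : R) (w : T) : R := expR (t * Num.min (X w) a).
Definition Mg (t : R) : R := \int[P]_w em t w.

Lemma mem t : measurable_fun setT (em t).
Proof. exact: (measurableT_comp (mfun_em t a)). Qed.

Lemma em_le t w : 0 <= t -> `|em t w| <= expR (t * a).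
Proof.
move=> t0; rewrite ger0_norm ?expR_ge0 // ler_expR ler_wpM2l //.
by rewrite ge_min lexx orbT.
Qed.

Lemma int_em t : 0 <= t -> P.-integrable setT (EFin \o em t).
Proof. by move=> t0; apply: (@int_bdd _ _ _ P _ (expR (t * a))); [exact: mem | move=> w; exact: em_le]. Qed.

Lemma d1_em t w : partial1of2 em t w = Num.min (X w) a * em t w.
Proof.
rewrite partial1of2E.
exact: (@derive_val _ _ _ _ _ _ _ (is_derive_expM (Num.min (X w) a) t)).
Qed.

Lemma X1 : P.-integrable setT (EFin \o X).
Proof.
apply/Lfun1_integrable; apply: (Lfun_subset12 (fin_num_measure _ _ _)) => //.
Qed.

Section der.
Variables (t v : R).
Hypothesis tv : 0 < t < v.

Let G w := `|X w| + a * expR (v * a).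

Let G_ub x w : `]0, v[%classic x -> setT w -> `|partial1of2 em x w| <= G w.
Proof.
rewrite /= in_itv /= => /andP[x0 xv] _; rewrite d1_em /em /G.
have e0 := expR_gt0 (x * Num.min (X w) a).
have [m0|m0] := leP 0 (Num.min (X w) a).
  rewrite ger0_norm ?mulr_ge0 ?expR_ge0 //.
  have ma : Num.min (X w) a <= a by rewrite ge_min lexx orbT.
  have : Num.min (X w) a * expR (x * Num.min (X w) a) <= a * expR (v * a).
    have e1 : expR (x * Num.min (X w) a) <= expR (v * a).
      by rewrite ler_expR; apply: ler_pM => //; exact: ltW.
    exact: ler_pM (ltW e0) ma e1.
  have := normr_ge0 (X w); lra.
have mX : Num.min (X w) a = X w.
  by move: m0; case: (leP (X w) a) => // xa; rewrite ltNge a0.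
rewrite mX in e0 *; rewrite normrM (ger0_norm (ltW e0)).
have : expR (x * X w) <= 1.
  by rewrite expR_le1 pmulr_rle0 // -mX ltW.
have : 0 <= a * expR (v * a) by rewrite mulr_ge0 ?expR_ge0.
have := normr_ge0 (X w).
nra.
Qed.

Let intG : P.-integrable setT (EFin \o G).
Proof.
have -> : EFin \o G = ((EFin \o (Num.norm \o X)) \+ (EFin \o cst (a * expR (v * a))%R))%E.
  by apply/funext => w; rewrite /= EFinD.
apply: integrableD => //; last exact: finite_measure_integrable_cst.
apply: integrable_norm; exact: X1.
Qed.


Lemma Mg_derivable : derivable Mg t 1.
Proof.
apply: (@derivable_under_integral R _ T P em setT measurableT t 0 v _ _ _ G).
- by rewrite /= in_itv /= (proj1 (andP tv)) (proj2 (andP tv)).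
- by move=> x; rewrite /= in_itv /= => /andP[x0 _]; apply: int_em; exact: ltW.
- move=> x w _ _; exact: (@ex_derive _ _ _ _ _ _ _ (is_derive_expM (Num.min (X w) a) x)).
- by move=> w; rewrite /G addr_ge0 // mulr_ge0 // expR_ge0.
- exact: intG.
- exact: G_ub.
Qed.

Lemma Mg_derive : derive1 Mg t = \int[P]_w (Num.min (X w) a * em t w).
Proof.
rewrite (@differentiation_under_integral R _ T P em setT measurableT t 0 v _ _ _ G).
- by apply: eq_Rintegral => w _; rewrite d1_em.
- by rewrite /= in_itv /= (proj1 (andP tv)) (proj2 (andP tv)).
- by move=> x; rewrite /= in_itv /= => /andP[x0 _]; apply: int_em; exact: ltW.
- move=> x w _ _; exact: (@ex_derive _ _ _ _ _ _ _ (is_derive_expM (Num.min (X w) a) x)).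
- by move=> w; rewrite /G addr_ge0 // mulr_ge0 // expR_ge0.
- exact: intG.
- exact: G_ub.
Qed.

End der.
End mgf.


Section bound.
Context {R : realType} {d d' : measure_display} {T : measurableType d} {T' : measurableType d'}
  (P : probability T R) (P' : probability T' R) (X : {RV P >-> R}) (Xs : {RV P' >-> R})
  (sigma k c : R).
Hypothesis X2 : (X : T -> R) \in Lfun P 2%:E.
Hypothesis ZB : zero_bias P X sigma P' Xs.
Hypothesis WL : weighted_le P' Xs P (fun w => X w + c) sigma k.
Hypothesis c0 : 0 < c.
Variable a : R.
Hypothesis a0 : 0 <= a.

Lemma deriv_bound t : 0 < t ->
  \int[P]_w (Num.min (X w) a * em P X a t w) <= k ^+ 2 * (t * expR (t * c)) * Mg P X a t.
Proof.
move=> t0.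
have mX : measurable_fun setT X by [].
have int1 : P.-integrable setT (EFin \o (fun w => Num.min (X w) a * em P X a t w)).
  apply: (@le_integrable _ _ _ _ _ _ _
     (EFin \o (fun w => expR (t * a) * `|X w| + 0 * X w ^+ 2 + a * expR (t * a)))).
  - by [].
  - apply/measurable_EFinP; apply: measurable_funM; last exact: mem P X a t.
    exact: (@measurable_minr _ _ _ _ X (cst a)).
  - move=> w _ /=; rewrite lee_fin.
    have e1 := em_le P X a t w (ltW t0).
    have hm : `|Num.min (X w) a| <= `|X w| + a.
      case: (leP (X w) a) => xa; first by rewrite lerDl.
      by rewrite ger0_norm // lerDr.
    rewrite mul0r addr0 [X in _ <= X]ger0_norm; last first.
      by rewrite addr_ge0 // mulr_ge0 // expR_ge0.
    rewrite normrM.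
    apply: (@le_trans _ _ ((`|X w| + a) * expR (t * a))).
      by apply: ler_pM => //; exact: normr_ge0.
    by rewrite mulrDl mulrC.
  - exact: int_poly3.
have int2 : P.-integrable setT (EFin \o (fun w => X w * Fa t a (X w))).
  apply: (@le_integrable _ _ _ _ _ _ _
     (EFin \o (fun w => expR (t * a) * `|X w| + (t * expR (t * a)) * X w ^+ 2))).
  - by [].
  - apply/measurable_EFinP; apply: measurable_funM => //.
    exact: (measurableT_comp (mfun_Fa t a)).
  - move=> w _ /=; rewrite lee_fin.
    have f1 := Fa_le t a (X w) (ltW t0) a0.
    have f0 := Fa_ge0 t a (X w) (ltW t0).
    rewrite [X in _ <= X]ger0_norm; last first.
      have := expR_ge0 (t * a); have := sqr_ge0 (X w); have := normr_ge0 (X w); have := ltW t0.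
      move=> h1 h2 h3 h4; apply: addr_ge0; [exact: mulr_ge0 | apply: mulr_ge0 => //; exact: mulr_ge0].
    rewrite normrM (ger0_norm f0) -real_normK ?num_real //.
    have : `|X w| * Fa t a (X w) <= `|X w| * (expR (t * a) * (1 + t * `|X w|)).
      by rewrite ler_wpM2l.
    lra.
  - exact: int_poly.
have intGs : P'.-integrable setT (EFin \o (fun w => derive1 (Fa t a) (Xs w))).
  have -> : (fun w => derive1 (Fa t a) (Xs w)) = Ga t a \o Xs.
    by apply/funext => w; rewrite /= Fa_derive // ltW.
  apply: (@int_bdd _ _ _ P' _ (t * expR (t * a))).
    exact: (measurableT_comp (mfun_Ga t a)).
  move=> w /=; rewrite ger0_norm ?Ga_le ?(ltW (Ga_gt0 _ _ _ t0)) //; exact: ltW.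
have intGc : P.-integrable setT (EFin \o (Ga t a \o (fun w => X w + c))).
  apply: (@int_bdd _ _ _ P _ (t * expR (t * a))).
    apply: (measurableT_comp (mfun_Ga t a)); exact: measurable_funD.
  move=> w /=; rewrite ger0_norm ?Ga_le ?(ltW (Ga_gt0 _ _ _ t0)) //; exact: ltW.
have intGs' : P'.-integrable setT (EFin \o (Ga t a \o Xs)).
  by move: intGs; congr (_.-integrable _ _); apply/funext => w; rewrite /= Fa_derive // ltW.
have step1 : \int[P]_w (Num.min (X w) a * em P X a t w) <= \int[P]_w (X w * Fa t a (X w)).
  by apply: le_Rintegral => // w _; rewrite /em key_pt // ltW.
have step2 : \int[P]_w (X w * Fa t a (X w)) = sigma ^+ 2 * \int[P']_w (Ga t a (Xs w)).
  have := @ZB (Fa t a) (Fa_abs t a t0) int2 intGs.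
  rewrite (expE P _ int2) (expE P' _ intGs) -EFinM => E.
  have E2 := EFin_inj E. rewrite E2.
  by congr (_ * _); apply: eq_Rintegral => w _; rewrite Fa_derive // ltW.
have step3 : sigma ^+ 2 * \int[P']_w (Ga t a (Xs w)) <= k ^+ 2 * \int[P]_w (Ga t a (X w + c)).
  have := @WL (Ga t a) (fun x y => Ga_mono t a x y (ltW t0)) (fun x => Ga_gt0 t a x t0) intGs' intGc.
  by rewrite (expE P' _ intGs') (expE P _ intGc) -!EFinM lee_fin.
have step4 : \int[P]_w (Ga t a (X w + c)) <= t * expR (t * c) * Mg P X a t.
  have ie := int_em P X a t (ltW t0).
  rewrite /Mg -(RintegralZl (t * expR (t * c)) measurableT ie).
  apply: le_Rintegral => //.
    have -> : EFin \o (fun w => t * expR (t * c) * em P X a t w) =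
      (fun w => ((t * expR (t * c))%:E * (EFin \o em P X a t) w)%E).
      by apply/funext => w /=; rewrite EFinM.
    exact: integrableZl.
  move=> w _; rewrite /em; exact: Ga_shift (ltW t0) (ltW c0).
have k0 : 0 <= k ^+ 2 by exact: sqr_ge0.
have := ler_wpM2l k0 step4.
rewrite -mulrA; lra.
Qed.

End bound.

Section tail.
Context {R : realType} {d : measure_display} {T : measurableType d}
  (P : probability T R) (X : {RV P >-> R}).

Lemma Mg_ge0 a t : 0 <= Mg P X a t.
Proof. by apply: Rintegral_ge0 => w _; exact: expR_ge0. Qed.

Lemma tail_bound x t : 0 < t ->
  (P [set w | (x <= X w)%R] <= (Mg P X x t * expR (- (t * x)))%:E)%E.
Proof.
move=> t0.
have mA : measurable [set w | x <= X w].
  have -> : [set w | x <= X w] = X @^-1` `[x, +oo[%classic.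
    by apply/seteqP; split => w /=; rewrite in_itv /= andbT.
  by apply: measurable_funPTI; exact: measurable_itv.
have ie := int_em P X x t (ltW t0).
have ie2 : P.-integrable setT (EFin \o (fun w => em P X x t w * expR (- (t * x)))).
  have -> : EFin \o (fun w => em P X x t w * expR (- (t * x))) =
      (fun w => ((EFin \o em P X x t) w * (expR (- (t * x)))%:E)%E).
    by apply/funext => w /=; rewrite EFinM.
  exact: integrableZr.
rewrite -(setIT [set w | x <= X w]) -integral_indic //.
rewrite /Mg -RintegralZr // -(RintE P _ ie2).
apply: ge0_le_integral => //. all: try (by move=> w _; rewrite lee_fin).
- by apply/measurable_EFinP; exact: measurable_indic.
- by apply/measurable_EFinP; apply: measurable_funM => //; exact: mem.
move=> w _; rewrite lee_fin /em /indic /=.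
case: (boolP (w \in [set w | x <= X w])) => [|_]; last first.
  by rewrite mulr_ge0 ?expR_ge0.
rewrite inE /= => xw; rewrite (min_r xw) -expRD.
by rewrite addrN expR0.
Qed.

End tail.

Section ode.
Context {R : realType} {d d' : measure_display} {T : measurableType d} {T' : measurableType d'}
  (P : probability T R) (P' : probability T' R) (X : {RV P >-> R}) (Xs : {RV P' >-> R})
  (sigma k c : R).
Hypothesis X2 : (X : T -> R) \in Lfun P 2%:E.
Hypothesis ZB : zero_bias P X sigma P' Xs.
Hypothesis WL : weighted_le P' Xs P (fun w => X w + c) sigma k.
Hypothesis c0 : 0 < c.
Variable a : R.
Hypothesis a0 : 0 <= a.

Lemma is_derive_sq (n s : R) : is_derive s 1 (fun s => s * (s * n)) (2 * s * n).
Proof.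
have H := is_deriveM (is_derive_id s (1:R)) (is_derive_mulc n s).
have -> : (fun s => s * (s * n)) = ( @id R) * (fun s => s * n) by [].
by apply: is_derive_eq H _; rewrite /GRing.scale /=; ring.
Qed.

Lemma Mg_is_derive (s : R) : 0 < s ->
  is_derive s 1 (Mg P X a) (\int[P]_w (Num.min (X w) a * em P X a s w)).
Proof.
move=> s0.
have sv : (0 < s) && (s < s + 1) by rewrite s0 ltrDl ltr01.
constructor; first exact: (Mg_derivable _ _ X2 _ a0 _ _ sv).
by rewrite -derive1E (Mg_derive _ _ X2 _ a0 _ _ sv).
Qed.

Lemma mgf_bound ts L : 0 < ts ->
  (forall t, 0 < t -> t <= ts -> k ^+ 2 * expR (t * c) <= L) ->
  Mg P X a ts <= expR (L * ts ^+ 2 / 2).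
Proof.
move=> ts0 HL.
set n := - (L / 2).
pose E := fun s : R => expR (s * (s * n)).
pose h := fun s => Mg P X a s * E s.
have dE (s : R) : is_derive s 1 E (E s * (2 * s * n)).
  exact: (@is_derive_expR_comp _ (fun s => s * (s * n)) s _ (is_derive_sq n s)).
have dh (s : R) : 0 < s -> is_derive s 1 h
    (Mg P X a s *: (E s * (2 * s * n)) + E s *: \int[P]_w (Num.min (X w) a * em P X a s w)).
  move=> s0; have H := is_deriveM (Mg_is_derive s s0) (dE s).
  have -> : h = (Mg P X a * E) by [].
  exact: H.
have hdec : forall e, 0 < e -> e < ts -> h ts <= h e.
  move=> e e0 ets.
  apply: (@ler0_derive1_le_cc _ h e ts).
  - move=> s; rewrite in_itv /= => /andP[es _].
    exact: (@ex_derive _ _ _ _ _ _ _ (dh s (lt_trans e0 es))).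
  - move=> s; rewrite in_itv /= => /andP[es sts].
    have s0 := lt_trans e0 es.
    rewrite derive1E (@derive_val _ _ _ _ _ _ _ (dh s s0)).
    have I1 := deriv_bound _ _ _ _ _ _ _ X2 ZB WL c0 _ a0 _ s0.
    have I2 : k ^+ 2 * (s * expR (s * c)) <= L * s.
      rewrite mulrCA mulrC ler_wpM2r //; first exact: ltW.
      exact: HL s0 (ltW sts).
    have M0 := Mg_ge0 P X a s.
    have I3 : k ^+ 2 * (s * expR (s * c)) * Mg P X a s <= L * s * Mg P X a s.
      by rewrite ler_wpM2r.
    have E0 : 0 < E s by exact: expR_gt0.
    rewrite /GRing.scale /= /n.
    have : E s * (\int[P]_w (Num.min (X w) a * em P X a s w) - L * s * Mg P X a s) <= 0.
      by rewrite pmulr_rle0 // subr_le0 (le_trans I1).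
    have -> : Mg P X a s * (E s * (2 * s * - (L / 2))) +
      E s * \int[P]_w (Num.min (X w) a * em P X a s w) =
      E s * (\int[P]_w (Num.min (X w) a * em P X a s w) - L * s * Mg P X a s).
      by field.
    by [].
  - apply: (@derivable_within_continuous _ _ h `[e, ts]) => s.
    rewrite in_itv /= => /andP[es _].
    exact: (@ex_derive _ _ _ _ _ _ _ (dh s (lt_le_trans e0 es))).
  - by rewrite in_itv /= lexx ltW.
  - by rewrite in_itv /= lexx ltW.
  - exact: ltW.
have L0 : 0 <= L.
  by apply: le_trans (HL ts ts0 (lexx ts)); rewrite mulr_ge0 ?sqr_ge0 ?expR_ge0.
set C := a * expR (ts * a).
have C0 : 0 <= C by rewrite mulr_ge0 ?expR_ge0.
have bound_e : forall e, 0 < e -> e <= ts -> Mg P X a e <= 1 + e * C.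
  move=> e e0 ets.
  apply: (@le_trans _ _ (\int[P]_w (1 + e * C))); last first.
    rewrite Rintegral_cst //. have HP : (P [set: T] = 1)%E by exact: probability_setT. rewrite [fine _]/= HP /= mulr1 //.
  rewrite /Mg; apply: le_Rintegral => //.
  - exact: int_em (ltW e0).
  - exact: finite_measure_integrable_cst.
  move=> w _; rewrite /em.
  have eC : 0 <= e * C by rewrite mulr_ge0 // ltW.
  have [m0|m0] := leP 0 (Num.min (X w) a).
    have [_ h2] := exp_secant e _ _ m0.
    rewrite mulr0 expR0 subr0 in h2.
    have ma : Num.min (X w) a <= a by rewrite ge_min lexx orbT.
    have e1 : expR (e * Num.min (X w) a) <= expR (ts * a).
      by rewrite ler_expR; apply: ler_pM => //; exact: ltW.
    have : e * expR (e * Num.min (X w) a) * Num.min (X w) a <= e * C.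
      rewrite -mulrA ler_wpM2l ?(ltW e0) // /C mulrC.
      by apply: ler_pM => //; exact: expR_ge0.
    lra.
  have : expR (e * Num.min (X w) a) <= 1.
    by rewrite expR_le1 pmulr_rle0 // ltW.
  lra.
have hE e : 0 < e -> h e <= Mg P X a e.
  move=> e0; rewrite /h -[leRHS]mulr1 ler_wpM2l ?Mg_ge0 // /E expR_le1.
  rewrite /n mulrN mulrN oppr_le0 mulr_ge0 ?(ltW e0) // mulr_ge0 ?(ltW e0) //.
  by rewrite divr_ge0.
have h1 : h ts <= 1.
  rewrite leNgt; apply/negP => H1.
  set del := h ts - 1.
  have del0 : 0 < del by rewrite /del subr_gt0.
  set e := Num.min (ts / 2) (del / (2 * (C + 1))).
  have e0 : 0 < e by rewrite lt_min divr_gt0 // divr_gt0 // mulr_gt0 // ltr_wpDl.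
  have ets : e < ts.
    by apply: (le_lt_trans (_ : e <= ts / 2)); [rewrite ge_min lexx | lra].
  have eC : e * (2 * (C + 1)) <= del.
    by rewrite -ler_pdivlMr ?mulr_gt0 ?ltr_wpDl // ge_min lexx orbT.
  have := hdec e e0 ets.
  have := hE e e0.
  have := bound_e e e0 (ltW ets).
  have eC' : 2 * (e * C) + 2 * e <= del.
    by rewrite (_ : 2 * (e * C) + 2 * e = e * (2 * (C + 1))) //; ring.
  move: eC' e0 del0; rewrite /del; clearbody e.
  lra.
have -> : Mg P X a ts = h ts * expR (L * ts ^+ 2 / 2).
  rewrite /h /E -mulrA -expRD.
  have -> : ts * (ts * n) + L * ts ^+ 2 / 2 = 0 by rewrite /n; field.
  by rewrite expR0 mulr1.
by rewrite -[leRHS]mul1r ler_wpM2r ?expR_ge0.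
Qed.
End ode.

Theorem corollary2p1 (R : realType)
  (d d' : measure_display) (T : measurableType d) (T' : measurableType d')
  (P : probability T R) (P' : probability T' R)
  (X : {RV P >-> R}) (Xs : {RV P' >-> R}) (sigma k c : R) :
  (X : T -> R) \in Lfun P 2 ->
  ('E_P[X] = 0)%E ->
  0 < sigma -> ('V_P[X] = (sigma ^+ 2)%:E)%E ->
  zero_bias P X sigma P' Xs ->
  0 < k -> 0 < c ->
  weighted_le P' Xs P (fun w => X w + c) sigma k ->
  forall x : R, 0 <= x ->
    (P [set w | (x <= X w - fine ('E_P[X])%E)%R] <=
       (expR (- (x ^+ 2 / (2 * (k ^+ 2 + c * x)))))%:E)%E.
Proof.
move=> X2 EX0 s0 VX ZB k0 c0 WL x x0.
rewrite EX0.
have -> : [set w | (x <= X w - fine (0 : \bar R))%R] = [set w | x <= X w].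
  by apply/seteqP; split => w /=; rewrite subr0.
have mA : measurable [set w | x <= X w].
  have -> : [set w | x <= X w] = X @^-1` `[x, +oo[%classic.
    by apply/seteqP; split => w /=; rewrite in_itv /= andbT.
  by apply: measurable_funPTI; exact: measurable_itv.
have [x00|xp] := eqVneq x 0.
  rewrite x00 expr0n /= mul0r oppr0 expR0.
  by rewrite -x00; exact: probability_le1.
have xpos : 0 < x by rewrite lt_neqAle eq_sym xp x0.
set L := k ^+ 2 + c * x.
have L0 : 0 < L by rewrite /L ltr_pwDl ?mulr_ge0 ?ltW // exprn_gt0.
set ts := x / L.
have ts0 : 0 < ts by rewrite divr_gt0.
have HL : forall t, 0 < t -> t <= ts -> k ^+ 2 * expR (t * c) <= L.
  move=> t t0 tts.
  have k2 : k ^+ 2 = L * (1 - c * ts) by rewrite /ts /L; field; rewrite gt_eqF.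
  have h1 := expR_ge1Dx (- (t * c)).
  have e0 := expR_gt0 (t * c).
  have h2 : expR (t * c) * (1 - t * c) <= 1.
    have : expR (t * c) * (1 + - (t * c)) <= expR (t * c) * expR (- (t * c)).
      by rewrite ler_pM2l.
    by rewrite -expRD addrN expR0.
  have h3 : 1 - c * ts <= 1 - t * c.
    by rewrite lerD2l lerN2 [c * ts]mulrC ler_wpM2r // ltW.
  have h4 : 0 < 1 - c * ts by rewrite /ts /L; rewrite mulrA subr_gt0 ltr_pdivrMr // mul1r ltr_pwDl // exprn_gt0.
  rewrite k2 -mulrA; apply: (@le_trans _ _ (L * 1)); last by rewrite mulr1.
  apply: ler_wpM2l; first exact: ltW.
  by apply: le_trans h2; rewrite mulrC ler_wpM2l // ltW.
have Htail := tail_bound P X x ts ts0.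
have Hm := mgf_bound _ _ _ _ _ _ _ X2 ZB WL c0 _ x0 _ _ ts0 HL.
apply: (le_trans Htail); rewrite lee_fin.
have : Mg P X x ts * expR (- (ts * x)) <= expR (L * ts ^+ 2 / 2) * expR (- (ts * x)).
  by rewrite ler_wpM2r ?expR_ge0.
move/le_trans; apply; rewrite -expRD.
have -> : L * ts ^+ 2 / 2 - ts * x = - (x ^+ 2 / (2 * L)).
  by rewrite /ts; field; rewrite gt_eqF.
by [].
Qed.
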